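(* Let $\varphi$ be a metric formula built only with non-empty intervals $[m,n)$ ($m<n$), let $(\langle \mathbf{H},\mathbf{T}\rangle,\tau)$ be a strict timed HT-trace of length $\lambda>0$, let $\langle D,H,T\rangle$ be its corresponding $QHT[\preccurlyeq_\delta]$ interpretation, and let $i\in[0,\lambda)$. Then $$(\langle \mathbf{H},\mathbf{T}\rangle,\tau),i\models\varphi \iff \langle D,H,T\rangle\models[\varphi]_{\tau(i)},$$ $$(\langle \mathbf{T},\mathbf{T}\rangle,\tau),i\models\varphi \iff \langle D,T,T\rangle\models[\varphi]_{\tau(i)}.$$
   Context: Metric formulas over an alphabet $\mathcal{A}$: $\varphi ::= p \mid \bot \mid \varphi_1\otimes\varphi_2 \mid \bullet_I\varphi \mid \varphi_1\,\mathsf{S}_I\,\varphi_2 \mid \varphi_1\,\mathsf{T}_I\,\varphi_2 \mid \bigcirc_I\varphi \mid \varphi_1\,\mathsf{U}_I\,\varphi_2 \mid \varphi_1\,\mathsf{R}_I\,\varphi_2$, with $p\in\mathcal{A}$, $\otimes\in\{\to,\wedge,\vee\}$, $I=[m,n)$, $m\in\mathbb{N}$, $n\in\mathbb{N}\cup\{\omega\}$ (previous, since, trigger, next, until, release). Derived: $\neg\varphi=\varphi\to\bot$, $\top=\neg\bot$, weak previous $\widehat{\bullet}_I\varphi=\bullet_I\varphi\vee\neg\bullet_I\top$, weak next $\widehat{\bigcirc}_I\varphi=\bigcirc_I\varphi\vee\neg\bigcirc_I\top$. A timed HT-trace of length $\lambda\in\mathbb{N}\cup\{\omega\}$ is $(\langle\mathbf{H},\mathbf{T}\rangle,\tau)$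 with $\mathbf{H}=(H_i)_{i\in[0,\lambda)}$, $\mathbf{T}=(T_i)_{i\in[0,\lambda)}$, $H_i\subseteq T_i\subseteq\mathcal{A}$, and $\tau:[0,\lambda)\to\mathbb{N}$, $\tau(0)=0$, $\tau(i)\le\tau(i+1)$; it is strict if $\tau(i)<\tau(i+1)$ whenever $i+1<\lambda$. Satisfaction at $k\in[0,\lambda)$ for $\mathbf{M}=(\langle\mathbf{H},\mathbf{T}\rangle,\tau)$: $\mathbf{M},k\not\models\bot$; $\mathbf{M},k\models p$ iff $p\in H_k$; $\wedge,\vee$ as usual; $\mathbf{M},k\models\varphi\to\psi$ iff for both $\mathbf{M}'=\mathbf{M}$ and $\mathbf{M}'=(\langle\mathbf{T},\mathbf{T}\rangle,\tau)$, $\mathbf{M}',k\not\models\varphi$ or $\mathbf{M}',k\models\psi$; $\bullet_I\varphi$: $k>0$, $\mathbf{M},k-1\models\varphi$ and $\tau(k)-\tau(k-1)\in I$; $\varphi\,\mathsf{S}_I\,\psi$: for some $j\in[0,k]$ with $\tau(k)-\tau(j)\in I$, $\mathbf{M},j\models\psi$ and $\mathbf{M},i\models\varphi$ for all $i\in(j,k]$; $\varphi\,\mathsf{T}_I\,\psi$: for all $j\in[0,k]$ with $\tau(k)-\tau(j)\in I$, $\mathbf{M},j\models\psi$ or $\mathbf{M},i\models\varphi$ for some $i\in(j,k]$; $\bigcirc_I\varphi$: $k+1<\lambda$, $\mathbf{M},k+1\models\varphi$, $\tau(k+1)-\tau(k)\in I$; $\varphi\,\mathsf{U}_I\,\psi$: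 for some $j\in[k,\lambda)$ with $\tau(j)-\tau(k)\in I$, $\mathbf{M},j\models\psi$ and $\mathbf{M},i\models\varphi$ for all $i\in[k,j)$; $\varphi\,\mathsf{R}_I\,\psi$: for all $j\in[k,\lambda)$ with $\tau(j)-\tau(k)\in I$, $\mathbf{M},j\models\psi$ or $\mathbf{M},i\models\varphi$ for some $i\in[k,j)$. $QHT[\preccurlyeq_\delta]$: function-free first-order language with constant $0$, monadic predicates $p/1$ for $p\in\mathcal{A}$, and binary predicates $\preccurlyeq_\delta$, $\delta\in\mathbb{Z}\cup\{\omega\}$. An interpretation is $\langle D,H,T\rangle$ with $0\in D\subseteq\mathbb{N}$, $H\subseteq T\subseteq\{p(d)\mid p\in\mathcal{A},d\in D\}$. Satisfaction: $\langle D,H,T\rangle\models p(t)$ iff $p(t)\in H$; $\models t_1\preccurlyeq_\delta t_2$ iff $t_1-t_2\le\delta$; $\wedge,\vee$ as usual; $\models\varphi\to\psi$ iff for $X\in\{H,T\}$, $\langle D,X,T\rangle\not\models\varphi$ or $\langle D,X,T\rangle\models\psi$; $\forall x\,\varphi(x)$ iff $\varphi(t)$ holds for all $t\in D$; $\exists x\,\varphi(x)$ iff for some $t\in D$. Abbreviations: $x\prec_\delta y:=\neg(y\preccurlyeq_{-\delta}x)$, $x\le y:=x\preccurlyeq_0 y$, $x=y:=x\le y\wedge y\le x$, $x<y:=x\le y\wedge\neg(x=y)$, and $x\odot y\oplus z$ means $x\odot y\wedge y\oplus z$. Translation $[\cdot]_x$ (each quantifier introducing a fresh variable), for $I=[m,n)$: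 $[\bot]_x=\bot$; $[p]_x=p(x)$; $[\varphi\otimes\psi]_x=[\varphi]_x\otimes[\psi]_x$; $[\bigcirc_{[m,n)}\psi]_x=\exists y(x<y\wedge\neg\exists z\,(x<z<y)\wedge x\preccurlyeq_{-m}y\prec_n x\wedge[\psi]_y)$; $[\widehat{\bigcirc}_{[m,n)}\psi]_x=\forall y(x<y\wedge\neg\exists z\,(x<z<y)\wedge x\preccurlyeq_{-m}y\prec_n x\to[\psi]_y)$; $[\varphi\,\mathsf{U}_{[m,n)}\,\psi]_x=\exists y(x\le y\wedge x\preccurlyeq_{-m}y\prec_n x\wedge[\psi]_y\wedge\forall z(x\le z<y\to[\varphi]_z))$; $[\varphi\,\mathsf{R}_{[m,n)}\,\psi]_x=\forall y((x\le y\wedge x\preccurlyeq_{-m}y\prec_n x)\to([\psi]_y\vee\exists z(x\le z<y\wedge[\varphi]_z)))$; $[\bullet_{[m,n)}\psi]_x=\exists y(y<x\wedge\neg\exists z(y<z<x)\wedge x\prec_n y\preccurlyeq_{-m}x\wedge[\psi]_y)$; $[\widehat{\bullet}_{[m,n)}\psi]_x=\forall y((y<x\wedge\neg\exists z(y<z<x)\wedge x\prec_n y\preccurlyeq_{-m}x)\to[\psi]_y)$; $[\varphi\,\mathsf{S}_{[m,n)}\,\psi]_x=\exists y(y\le x\wedge x\prec_n y\preccurlyeq_{-m}x\wedge[\psi]_y\wedge\forall z(y<z\le x\to[\varphi]_z))$; $[\varphi\,\mathsf{T}_{[m,n)}\,\psi]_x=\forall y((y\le x\wedge x\prec_n y\preccurlyeq_{-m}x)\to([\psi]_y\vee\exists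 z(y<z\le x\wedge[\varphi]_z)))$. The interpretation corresponding to $(\langle\mathbf{H},\mathbf{T}\rangle,\tau)$ of length $\lambda>0$ is $\langle D,H,T\rangle$ with $D=\{\tau(i)\mid i\in[0,\lambda)\}$, $H=\{p(\tau(i))\mid i\in[0,\lambda),p\in H_i\}$, $T=\{p(\tau(i))\mid i\in[0,\lambda),p\in T_i\}$. *)

(* Defs.v *)
From Stdlib Require Import Arith ZArith.
Set Implicit Arguments.

(* Time intervals J = [m, n), m : nat, n : nat ∪ {ω} (None = ω).        *)
Record interval := Itv { itv_lo : nat; itv_hi : option nat }.

Definition in_itv (J : interval) (d : nat) : Prop :=
  itv_lo J <= d /\ match itv_hi J with None => True | Some n => d < n end.

Definition itv_nonempty (J : interval) : Prop :=
  match itv_hi J with None => True | Some n => itv_lo J < n end.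

(* Lengths λ ∈ ℕ ∪ {ω} (None = ω); [inlen lam j] means j ∈ [0, λ). *)
Definition inlen (lam : option nat) (j : nat) : Prop :=
  match lam with None => True | Some l => j < l end.

(* Metric formulas.  Weak previous / weak next are included as         *)
(* constructors because the translation has dedicated clauses for      *)
(* them; their semantics is that of the abbreviations                  *)
(* •̂_I φ = •_I φ ∨ ¬•_I ⊤  and  ◯̂_I φ = ◯_I φ ∨ ¬◯_I ⊤.                *)
Inductive mform (A : Type) : Type :=
| MAtom : A -> mform A
| MBot : mform A
| MImp : mform A -> mform A -> mform A
| MAnd : mform A -> mform A -> mform A
| MOr : mform A -> mform A -> mform A
| MPrev : interval -> mform A -> mform A
| MWPrev : interval -> mform A -> mform A
| MSince : interval -> mform A -> mform A -> mform A
| MTrigger : interval -> mform A -> mform A -> mform A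
| MNext : interval -> mform A -> mform A
| MWNext : interval -> mform A -> mform A
| MUntil : interval -> mform A -> mform A -> mform A
| MRelease : interval -> mform A -> mform A -> mform A.

Arguments MBot {A}.

Fixpoint nonempty_intervals {A} (f : mform A) : Prop :=
  match f with
  | MAtom _ | MBot => True
  | MImp f g | MAnd f g | MOr f g => nonempty_intervals f /\ nonempty_intervals g
  | MPrev J f | MWPrev J f | MNext J f | MWNext J f =>
      itv_nonempty J /\ nonempty_intervals f
  | MSince J f g | MTrigger J f g | MUntil J f g | MRelease J f g =>
      itv_nonempty J /\ nonempty_intervals f /\ nonempty_intervals g
  end.

(* Timed HT-traces: H T : nat -> A -> Prop (H i p  means p ∈ H_i),      *)
(* tau : nat -> nat, length lam; only positions in [0, lam) matter.    *)
Definition timed_ht_trace {A} (lam : option nat) (H T : nat -> A -> Prop)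
    (tau : nat -> nat) : Prop :=
  (forall i p, inlen lam i -> H i p -> T i p) /\
  tau 0 = 0 /\
  (forall i, inlen lam (S i) -> tau i <= tau (S i)).

Definition strict_trace {A} (lam : option nat) (H T : nat -> A -> Prop)
    (tau : nat -> nat) : Prop :=
  timed_ht_trace lam H T tau /\
  (forall i, inlen lam (S i) -> tau i < tau (S i)).

(* Satisfaction (M, k) ⊨ φ with M = (⟨X, T⟩, tau) of length lam.        *)
Fixpoint sat {A} (lam : option nat) (tau : nat -> nat) (T : nat -> A -> Prop)
    (X : nat -> A -> Prop) (k : nat) (f : mform A) {struct f} : Prop :=
  match f with
  | MAtom p => X k p
  | MBot => False
  | MAnd f g => sat lam tau T X k f /\ sat lam tau T X k g
  | MOr f g => sat lam tau T X k f \/ sat lam tau T X k g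
  | MImp f g =>
      (~ sat lam tau T X k f \/ sat lam tau T X k g) /\
      (~ sat lam tau T T k f \/ sat lam tau T T k g)
  | MPrev J f =>
      0 < k /\ sat lam tau T X (k - 1) f /\ in_itv J (tau k - tau (k - 1))
  | MWPrev J f =>
      (* •_I f ∨ ¬•_I ⊤ ; ⊤ holds everywhere *)
      (0 < k /\ sat lam tau T X (k - 1) f /\ in_itv J (tau k - tau (k - 1))) \/
      ~ (0 < k /\ in_itv J (tau k - tau (k - 1)))
  | MSince J f g =>
      exists j, j <= k /\ in_itv J (tau k - tau j) /\ sat lam tau T X j g /\
        (forall i, j < i -> i <= k -> sat lam tau T X i f)
  | MTrigger J f g =>
      forall j, j <= k -> in_itv J (tau k - tau j) ->
        sat lam tau T X j g \/ (exists i, j < i /\ i <= k /\ sat lam tau T X i f)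
  | MNext J f =>
      inlen lam (S k) /\ sat lam tau T X (S k) f /\ in_itv J (tau (S k) - tau k)
  | MWNext J f =>
      (inlen lam (S k) /\ sat lam tau T X (S k) f /\ in_itv J (tau (S k) - tau k)) \/
      ~ (inlen lam (S k) /\ in_itv J (tau (S k) - tau k))
  | MUntil J f g =>
      exists j, k <= j /\ inlen lam j /\ in_itv J (tau j - tau k) /\
        sat lam tau T X j g /\ (forall i, k <= i -> i < j -> sat lam tau T X i f)
  | MRelease J f g =>
      forall j, k <= j -> inlen lam j -> in_itv J (tau j - tau k) ->
        sat lam tau T X j g \/ (exists i, k <= i /\ i < j /\ sat lam tau T X i f)
  end.

(* Terms: variables (indexed by nat) and constants naming elements of  *)
(* ℕ (the constant 0 is TCon 0; constants d ∈ D are used for [φ]_d).   *)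
(* δ ∈ ℤ ∪ {ω} is option Z, None = ω.                                  *)
Inductive term := TVar : nat -> term | TCon : nat -> term.

Inductive fform (A : Type) : Type :=
| FAtom : A -> term -> fform A
| FLe : option Z -> term -> term -> fform A
| FBot : fform A
| FImp : fform A -> fform A -> fform A
| FAnd : fform A -> fform A -> fform A
| FOr : fform A -> fform A -> fform A
| FAll : nat -> fform A -> fform A
| FEx : nat -> fform A -> fform A.

Arguments FBot {A}.
Arguments FLe {A}.

Definition teval (e : nat -> nat) (t : term) : nat :=
  match t with TVar v => e v | TCon c => c end.

Definition upd (e : nat -> nat) (v d : nat) : nat -> nat :=
  fun w => if Nat.eqb w v then d else e w.

(* ⟨D, X, T⟩ ⊨ f under assignment e; atoms p(d) are represented by
   X p d (i.e. p(d) ∈ X). *)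
Fixpoint fsat {A} (D : nat -> Prop) (T : A -> nat -> Prop) (X : A -> nat -> Prop)
    (e : nat -> nat) (f : fform A) {struct f} : Prop :=
  match f with
  | FAtom p t => X p (teval e t)
  | FLe od t1 t2 =>
      match od with
      | None => True
      | Some d => (Z.of_nat (teval e t1) - Z.of_nat (teval e t2) <= d)%Z
      end
  | FBot => False
  | FAnd f g => fsat D T X e f /\ fsat D T X e g
  | FOr f g => fsat D T X e f \/ fsat D T X e g
  | FImp f g =>
      (~ fsat D T X e f \/ fsat D T X e g) /\
      (~ fsat D T T e f \/ fsat D T T e g)
  | FAll v f => forall d, D d -> fsat D T X (upd e v d) f
  | FEx v f => exists d, D d /\ fsat D T X (upd e v d) f
  end.

Definition fneg {A} (f : fform A) : fform A := FImp f FBot.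
Definition ftop {A} : fform A := fneg FBot.
Definition fle {A} (x y : term) : fform A := FLe (Some 0%Z) x y.
Definition feq {A} (x y : term) : fform A := FAnd (fle x y) (fle y x).
Definition flt {A} (x y : term) : fform A := FAnd (fle x y) (fneg (feq x y)).
Definition fpreceq_negm {A} (m : nat) (x y : term) : fform A :=
  FLe (Some (- Z.of_nat m)%Z) x y.
Definition fprec {A} (n : option nat) (x y : term) : fform A :=
  match n with
  | Some n => fneg (FLe (Some (- Z.of_nat n)%Z) y x)
  | None => ftop
  end.

(* Variables TVar c and TVar (c+1) are the fresh
   variables y, z introduced at this level; subformulas use variables
   >= c+2, so every quantifier binds a variable distinct from all
   variables in whose scope it occurs. *)
Fixpoint trans {A} (f : mform A) (x : term) (c : nat) {struct f} : fform A :=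
  let y := TVar c in
  let z := TVar (S c) in
  let c' := S (S c) in
  match f with
  | MBot => FBot
  | MAtom p => FAtom p x
  | MImp f g => FImp (trans f x c) (trans g x c)
  | MAnd f g => FAnd (trans f x c) (trans g x c)
  | MOr f g => FOr (trans f x c) (trans g x c)
  | MNext J g =>
      FEx c (FAnd (flt x y)
            (FAnd (fneg (FEx (S c) (FAnd (flt x z) (flt z y))))
            (FAnd (FAnd (fpreceq_negm (itv_lo J) x y) (fprec (itv_hi J) y x))
                  (trans g y c'))))
  | MWNext J g =>
      FAll c (FImp (FAnd (flt x y)
                   (FAnd (fneg (FEx (S c) (FAnd (flt x z) (flt z y))))
                         (FAnd (fpreceq_negm (itv_lo J) x y) (fprec (itv_hi J) y x))))
                   (trans g y c'))
  | MUntil J f g =>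
      FEx c (FAnd (fle x y)
            (FAnd (FAnd (fpreceq_negm (itv_lo J) x y) (fprec (itv_hi J) y x))
            (FAnd (trans g y c')
                  (FAll (S c) (FImp (FAnd (fle x z) (flt z y)) (trans f z c'))))))
  | MRelease J f g =>
      FAll c (FImp (FAnd (fle x y)
                         (FAnd (fpreceq_negm (itv_lo J) x y) (fprec (itv_hi J) y x)))
                   (FOr (trans g y c')
                        (FEx (S c) (FAnd (FAnd (fle x z) (flt z y)) (trans f z c')))))
  | MPrev J g =>
      FEx c (FAnd (flt y x)
            (FAnd (fneg (FEx (S c) (FAnd (flt y z) (flt z x))))
            (FAnd (FAnd (fprec (itv_hi J) x y) (fpreceq_negm (itv_lo J) y x))
                  (trans g y c'))))
  | MWPrev J g =>
      FAll c (FImp (FAnd (flt y x)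
                   (FAnd (fneg (FEx (S c) (FAnd (flt y z) (flt z x))))
                         (FAnd (fprec (itv_hi J) x y) (fpreceq_negm (itv_lo J) y x))))
                   (trans g y c'))
  | MSince J f g =>
      FEx c (FAnd (fle y x)
            (FAnd (FAnd (fprec (itv_hi J) x y) (fpreceq_negm (itv_lo J) y x))
            (FAnd (trans g y c')
                  (FAll (S c) (FImp (FAnd (flt y z) (fle z x)) (trans f z c'))))))
  | MTrigger J f g =>
      FAll c (FImp (FAnd (fle y x)
                         (FAnd (fprec (itv_hi J) x y) (fpreceq_negm (itv_lo J) y x)))
                   (FOr (trans g y c')
                        (FEx (S c) (FAnd (FAnd (flt y z) (fle z x)) (trans f z c')))))
  end.

Definition corrD (lam : option nat) (tau : nat -> nat) (d : nat) : Prop :=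
  exists i, inlen lam i /\ tau i = d.

Definition corrI {A} (lam : option nat) (tau : nat -> nat) (X : nat -> A -> Prop)
    (p : A) (d : nat) : Prop :=
  exists i, inlen lam i /\ tau i = d /\ X i p.

(* [φ]_x is closed when x is a constant; the assignment is irrelevant. *)
Definition env0 : nat -> nat := fun _ => 0.

(* Main.v *)
Require Import Defs.
From Stdlib Require Import Arith ZArith Lia Classical.

Section S.
Variables (A : Type) (lam : option nat) (T : nat -> A -> Prop) (tau : nat -> nat).
Hypothesis Hstep : forall i, inlen lam (S i) -> tau i < tau (S i).

Notation D := (corrD lam tau).

Lemma inlen_down i j : inlen lam j -> i <= j -> inlen lam i.
Proof. destruct lam; simpl; lia. Qed.

Lemma mono i j : inlen lam j -> i < j -> tau i < tau j.
Proof.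
  induction j; intros Hj Hij; [lia|].
  assert (tau j < tau (S j)) by auto.
  destruct (Nat.eq_dec i j); [subst; auto|].
  assert (tau i < tau j) by (apply IHj; [apply (inlen_down j (S j) Hj); lia | lia]). lia.
Qed.

Lemma cmp i j : inlen lam i -> inlen lam j ->
  (i < j -> tau i < tau j) /\ (j < i -> tau j < tau i) /\ (i = j -> tau i = tau j).
Proof. intros; split; [|split]; intros; subst; auto; apply mono; auto. Qed.

Lemma upd_same e v d : teval (upd e v d) (TVar v) = d.
Proof. simpl. unfold upd. rewrite Nat.eqb_refl. auto. Qed.

Lemma upd_other e v d x : (forall w, x = TVar w -> w <> v) -> teval (upd e v d) x = teval e x.
Proof. destruct x as [w|w]; simpl; auto. intros H. unfold upd.
  destruct (Nat.eqb_spec w v); auto. exfalso; apply (H w); auto. Qed.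

Section F.
Variables (TT X : A -> nat -> Prop).

Lemma L_le e a b : fsat D TT X e (fle a b) <-> teval e a <= teval e b.
Proof. simpl. lia. Qed.
Lemma L_lt e a b : fsat D TT X e (flt a b) <-> teval e a < teval e b.
Proof. simpl. lia. Qed.
Lemma L_pm e m a b : fsat D TT X e (fpreceq_negm m a b) <-> teval e a + m <= teval e b.
Proof. simpl. lia. Qed.
Lemma L_pr e n a b : fsat D TT X e (fprec n a b) <->
  match n with Some n => teval e a < teval e b + n | None => True end.
Proof. destruct n; simpl; [lia|tauto]. Qed.
End F.

Lemma persist (f : mform A) : forall X k, (forall i p, inlen lam i -> X i p -> T i p) ->
  inlen lam k -> sat lam tau T X k f -> sat lam tau T T k f.
Proof.
  induction f; intros X k HX Hk; simpl.
  - auto.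
  - auto.
  - tauto.
  - intuition eauto.
  - intuition eauto.
  - intros [h1 [h2 h3]]; split; [|split]; auto. apply (IHf X); auto. apply (inlen_down _ k); auto; lia.
  - intros [[h1 [h2 h3]]|h]; [left|right]; auto. split; [|split]; auto. apply (IHf X); auto. apply (inlen_down _ k); auto; lia.
  - intros [j [h1 [h2 [h3 h4]]]]. exists j; refine (conj h1 (conj h2 (conj _ _))).
    + apply (IHf2 X); auto. apply (inlen_down _ k); auto.
    + intros. apply (IHf1 X); auto. apply (inlen_down _ k); auto.
  - intros h j h1 h2. destruct (h j h1 h2) as [h3|[i0 [h4 [h5 h6]]]].
    + left; apply (IHf2 X); auto. apply (inlen_down _ k); auto.
    + right; exists i0; refine (conj h4 (conj h5 _)). apply (IHf1 X) in h6; auto. apply (inlen_down _ k); auto.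
  - intros [h1 [h2 h3]]; split; [|split]; auto. apply (IHf X); auto.
  - intros [[h1 [h2 h3]]|h]; [left|right]; auto. split; [|split]; auto. apply (IHf X); auto.
  - intros [j [h1 [h2 [h3 [h4 h5]]]]]. exists j; refine (conj h1 (conj h2 (conj h3 (conj _ _)))).
    + apply (IHf2 X); auto.
    + intros. apply (IHf1 X); auto. apply (inlen_down _ j); auto; lia.
  - intros h j h1 h2 h3. destruct (h j h1 h2 h3) as [h4|[i0 [h5 [h6 h7]]]].
    + left; apply (IHf2 X); auto.
    + right; exists i0; refine (conj h5 (conj h6 _)). apply (IHf1 X) in h7; auto. apply (inlen_down _ j); auto; lia.
Qed.

Lemma L_exD (P : nat -> Prop) : (exists d, D d /\ P d) <-> exists j, inlen lam j /\ P (tau j).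
Proof. split; [intros [d [[j [h1 <-]] h]]|intros [j [h1 h]]]; eauto. exists (tau j); split; auto. exists j; auto. Qed.
Lemma L_allD (P : nat -> Prop) : (forall d, D d -> P d) <-> forall j, inlen lam j -> P (tau j).
Proof. split; intros h. - intros j hj; apply h; exists j; auto. - intros d [j [hj <-]]; auto. Qed.

Lemma L_nb (TT X : A -> nat -> Prop) e v a b : fsat D TT X e (fneg (FEx v (FAnd (flt a (TVar v)) (flt (TVar v) b)))) <->
   ~ exists j, inlen lam j /\ teval (upd e v (tau j)) a < tau j /\ tau j < teval (upd e v (tau j)) b.
Proof.
  unfold fneg; cbn [fsat]. rewrite !L_exD. setoid_rewrite L_lt. setoid_rewrite upd_same. tauto.
Qed.

Lemma itvN J a b : a <= b -> (in_itv J (b - a) <-> a + itv_lo J <= b /\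
   match itv_hi J with Some n => b < a + n | None => True end).
Proof. unfold in_itv; destruct (itv_hi J); intros; lia. Qed.


Lemma next_cond k j J : inlen lam k -> inlen lam j ->
  (tau k < tau j /\ ~ (exists j0, inlen lam j0 /\ tau k < tau j0 < tau j) /\
   (tau k + itv_lo J <= tau j /\ match itv_hi J with Some n => tau j < tau k + n | None => True end))
  <-> (j = S k /\ in_itv J (tau (S k) - tau k)).
Proof.
  intros Hk Hj. split.
  - intros [h1 [h2 h3]]. pose proof (cmp k j Hk Hj).
    assert (j = S k).
    { destruct (Nat.eq_dec j (S k)); auto. exfalso; apply h2; exists (S k).
      assert (k < j) by lia. assert (inlen lam (S k)) by (apply (inlen_down _ j); auto; lia).
      pose proof (cmp (S k) j H1 Hj). split; auto; split; [apply Hstep; auto| lia]. }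
    subst. split; auto. rewrite itvN by lia; exact h3.
  - intros [-> h]. pose proof (Hstep k Hj). rewrite itvN in h by lia. split; auto. split; auto.
    intros [j0 [hj0 [a b]]]. pose proof (cmp j0 k hj0 Hk). pose proof (cmp j0 (S k) hj0 Hj). lia.
Qed.

Lemma prev_cond k j J : inlen lam k -> inlen lam j ->
  (tau j < tau k /\ ~ (exists j0, inlen lam j0 /\ tau j < tau j0 < tau k) /\
   (match itv_hi J with Some n => tau k < tau j + n | None => True end /\ tau j + itv_lo J <= tau k))
  <-> (0 < k /\ j = k - 1 /\ in_itv J (tau k - tau (k - 1))).
Proof.
  intros Hk Hj. split.
  - intros [h1 [h2 h3]]. pose proof (cmp k j Hk Hj).
    assert (j = k - 1 /\ 0 < k) as [-> ?].
    { destruct (Nat.eq_dec j (k - 1)); [lia|]. exfalso; apply h2; exists (k - 1).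
      assert (j < k) by lia. assert (inlen lam (k - 1)) by (apply (inlen_down _ k); auto; lia).
      pose proof (cmp j (k - 1) Hj H1). pose proof (Hstep (k - 1)). replace (S (k - 1)) with k in H3 by lia.
      split; auto; split; [lia| auto]. }
    split; auto. split; auto. rewrite itvN by lia; destruct h3; split; auto.
  - intros [h0 [-> h]]. pose proof (Hstep (k - 1)). replace (S (k - 1)) with k in H by lia.
    specialize (H Hk). rewrite itvN in h by lia. destruct h as [hl hm]. split; auto. split; [|split; auto].
    intros [j0 [hj0 [a b]]]. pose proof (cmp j0 k hj0 Hk). pose proof (cmp j0 (k - 1) hj0 Hj). lia.
Qed.

Lemma main (f : mform A) : forall X x c e k, (forall i p, inlen lam i -> X i p -> T i p) ->
  inlen lam k -> teval e x = tau k -> (forall v, x = TVar v -> v < c) ->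
  (sat lam tau T X k f <-> fsat D (corrI lam tau T) (corrI lam tau X) e (trans f x c)).
Proof.
  induction f; intros X x c e k HX Hk Hex Hxc;
  assert (E1 : forall d, teval (upd e c d) x = tau k) by
    (intros; rewrite upd_other; auto; intros w ->; specialize (Hxc w eq_refl); lia);
  assert (E2 : forall d d', teval (upd (upd e c d) (S c) d') x = tau k) by
    (intros; rewrite upd_other; auto; intros w ->; specialize (Hxc w eq_refl); lia);
  assert (E3 : forall d d', teval (upd (upd e c d) (S c) d') (TVar c) = d) by
    (intros; rewrite upd_other, upd_same; auto; intros w [=]; lia);
  assert (HT : forall i p, inlen lam i -> T i p -> T i p) by auto;
  assert (IHc : (forall v, TVar c = TVar v -> v < S (S c))) by (intros v [=]; lia);
  assert (IHz : (forall v, TVar (S c) = TVar v -> v < S (S c))) by (intros v [=]; lia);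
  cbn [trans fsat sat];
  repeat (first [rewrite L_exD | setoid_rewrite L_exD | setoid_rewrite L_allD | setoid_rewrite L_nb
          | setoid_rewrite L_lt | setoid_rewrite L_le | setoid_rewrite L_pm | setoid_rewrite L_pr
          | setoid_rewrite E1 | setoid_rewrite E2 | setoid_rewrite E3 | setoid_rewrite upd_same]).
  -
    unfold corrI. rewrite Hex. split; [intros h; exists k; auto|].
    intros [i [hi [he hx]]]. pose proof (cmp i k hi Hk). assert (i = k) by lia. subst; auto.
  - tauto.
  - rewrite (IHf1 X x c e k), (IHf2 X x c e k), (IHf1 T x c e k), (IHf2 T x c e k); auto. tauto.
  - rewrite (IHf1 X x c e k), (IHf2 X x c e k); auto. tauto.
  - rewrite (IHf1 X x c e k), (IHf2 X x c e k); auto. tauto.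
  -
    split.
    + intros [h0 [h1 h2]]. assert (hkm : inlen lam (k - 1)) by (apply (inlen_down _ k); auto; lia).
      exists (k - 1). split; auto. rewrite E1, upd_same.
      destruct (proj2 (prev_cond k (k - 1) i Hk hkm) (conj h0 (conj eq_refl h2))) as [c1 [c2 c3]].
      split; [auto|split; [auto|split; [auto|]]].
      exact (proj1 (IHf X (TVar c) (S (S c)) _ (k - 1) HX hkm (upd_same _ _ _) IHc) h1).
    + intros [j [hj [c1 [c2 [c3 hg]]]]]. rewrite E1, upd_same in c3.
      destruct (proj1 (prev_cond k j i Hk hj) (conj c1 (conj c2 c3))) as [h0 [-> h2]].
      split; auto. split; auto.
      exact (proj2 (IHf X (TVar c) (S (S c)) _ (k - 1) HX hj (upd_same _ _ _) IHc) hg).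
  -
    split.
    + intros h j hj. rewrite E1, upd_same.
      match goal with |- (~ ?P \/ _) /\ _ => destruct (classic P) as [hc|hc] end; [|tauto].
      destruct (proj1 (prev_cond k j i Hk hj) hc) as [h0 [-> h2]].
      destruct h as [[_ [hs _]]|hn]; [|exfalso; tauto].
      split; right.
      * exact (proj1 (IHf X (TVar c) (S (S c)) _ (k - 1) HX hj (upd_same _ _ _) IHc) hs).
      * exact (proj1 (IHf T (TVar c) (S (S c)) _ (k - 1) HT hj (upd_same _ _ _) IHc) (persist f X _ HX hj hs)).
    + intros h. destruct (classic (0 < k /\ in_itv i (tau k - tau (k - 1)))) as [[h0 h2]|hn]; [left|right; auto].
      assert (hkm : inlen lam (k - 1)) by (apply (inlen_down _ k); auto; lia).
      specialize (h (k - 1) hkm). rewrite E1, upd_same in h. destruct h as [[hn|hg] _].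
      * exfalso; apply hn; apply (proj2 (prev_cond k (k - 1) i Hk hkm)); auto.
      * split; auto; split; auto.
        exact (proj2 (IHf X (TVar c) (S (S c)) _ (k - 1) HX hkm (upd_same _ _ _) IHc) hg).
  -
    split.
    + intros [j [hjk [hit [hg hf]]]]. assert (hj : inlen lam j) by (apply (inlen_down _ k); auto).
      pose proof (cmp j k hj Hk) as cj. rewrite itvN in hit by lia.
      exists j. split; auto. split; [lia|]. rewrite E1, upd_same. split; [destruct hit; split; auto|].
      split; [exact (proj1 (IHf2 X (TVar c) (S (S c)) _ j HX hj (upd_same _ _ _) IHc) hg)|].
      intros j0 hj0. pose proof (cmp j j0 hj hj0). pose proof (cmp j0 k hj0 Hk).
      destruct (classic (tau j < tau j0 <= tau k)) as [hc|hc]; [|tauto].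
      assert (hs : sat lam tau T X j0 f1) by (apply hf; lia). split; right.
      * exact (proj1 (IHf1 X (TVar (S c)) (S (S c)) _ j0 HX hj0 (upd_same _ _ _) IHz) hs).
      * exact (proj1 (IHf1 T (TVar (S c)) (S (S c)) _ j0 HT hj0 (upd_same _ _ _) IHz) (persist f1 X _ HX hj0 hs)).
    + intros [j [hj [hle [[hm hl] [hg hf]]]]]. rewrite E1, upd_same in hm. pose proof (cmp j k hj Hk).
      exists j. split; [lia|]. split; [rewrite itvN by lia; split; auto|].
      split; [exact (proj2 (IHf2 X (TVar c) (S (S c)) _ j HX hj (upd_same _ _ _) IHc) hg)|].
      intros i0 h1 h2. assert (hi0 : inlen lam i0) by (apply (inlen_down _ k); auto).
      pose proof (cmp j i0 hj hi0). pose proof (cmp i0 k hi0 Hk).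
      destruct (hf i0 hi0) as [[hn|hs] _].
      * exfalso; apply hn; lia.
      * exact (proj2 (IHf1 X (TVar (S c)) (S (S c)) _ i0 HX hi0 (upd_same _ _ _) IHz) hs).
  -
    split.
    + intros h j hj. rewrite E1, upd_same. pose proof (cmp j k hj Hk).
      match goal with |- (~ ?P \/ _) /\ _ => destruct (classic P) as [hc|hc] end; [|tauto].
      destruct hc as [hle [hm hl]]. assert (hjk : j <= k) by lia.
      assert (hit : in_itv i (tau k - tau j)) by (rewrite itvN by lia; split; auto).
      destruct (h j hjk hit) as [hg|[i0 [a [b hs]]]].
      * split; right; left.
        -- exact (proj1 (IHf2 X (TVar c) (S (S c)) _ j HX hj (upd_same _ _ _) IHc) hg).
        -- exact (proj1 (IHf2 T (TVar c) (S (S c)) _ j HT hj (upd_same _ _ _) IHc) (persist f2 X _ HX hj hg)).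
      * assert (hi0 : inlen lam i0) by (apply (inlen_down _ k); auto).
        pose proof (cmp j i0 hj hi0). pose proof (cmp i0 k hi0 Hk).
        split; right; right; exists i0; (split; [auto|split; [lia|]]).
        -- exact (proj1 (IHf1 X (TVar (S c)) (S (S c)) _ i0 HX hi0 (upd_same _ _ _) IHz) hs).
        -- exact (proj1 (IHf1 T (TVar (S c)) (S (S c)) _ i0 HT hi0 (upd_same _ _ _) IHz) (persist f1 X _ HX hi0 hs)).
    + intros h j hjk hit. assert (hj : inlen lam j) by (apply (inlen_down _ k); auto).
      specialize (h j hj). rewrite E1, upd_same in h. destruct h as [h _].
      pose proof (cmp j k hj Hk). rewrite itvN in hit by lia.
      destruct h as [hn|[hg|[j0 [hj0 [hb hf]]]]].
      * exfalso; apply hn; split; [lia| destruct hit; split; auto].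
      * left. exact (proj2 (IHf2 X (TVar c) (S (S c)) _ j HX hj (upd_same _ _ _) IHc) hg).
      * right. pose proof (cmp j j0 hj hj0). pose proof (cmp j0 k hj0 Hk).
        exists j0; split; [lia|split; [lia|]].
        exact (proj2 (IHf1 X (TVar (S c)) (S (S c)) _ j0 HX hj0 (upd_same _ _ _) IHz) hf).
  -
    split.
    + intros [h1 [h2 h3]]. exists (S k). split; auto. rewrite E1, upd_same.
      destruct (proj2 (next_cond k (S k) i Hk h1) (conj eq_refl h3)) as [c1 [c2 c3]].
      split; [auto|split; [auto|split; [auto|]]].
      exact (proj1 (IHf X (TVar c) (S (S c)) _ (S k) HX h1 (upd_same _ _ _) IHc) h2).
    + intros [j [hj [c1 [c2 [c3 hg]]]]]. rewrite E1, upd_same in c3.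
      destruct (proj1 (next_cond k j i Hk hj) (conj c1 (conj c2 c3))) as [-> h3].
      split; auto. split; auto.
      exact (proj2 (IHf X (TVar c) (S (S c)) _ (S k) HX hj (upd_same _ _ _) IHc) hg).
  -
    split.
    + intros h j hj. rewrite E1, upd_same.
      match goal with |- (~ ?P \/ _) /\ _ => destruct (classic P) as [hc|hc] end; [|tauto].
      destruct (proj1 (next_cond k j i Hk hj) hc) as [-> h3].
      destruct h as [[_ [hs _]]|hn]; [|exfalso; tauto].
      split; right.
      * exact (proj1 (IHf X (TVar c) (S (S c)) _ (S k) HX hj (upd_same _ _ _) IHc) hs).
      * exact (proj1 (IHf T (TVar c) (S (S c)) _ (S k) HT hj (upd_same _ _ _) IHc) (persist f X _ HX hj hs)).
    + intros h. destruct (classic (inlen lam (S k) /\ in_itv i (tau (S k) - tau k))) as [[h1 h3]|hn]; [left|right; auto].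
      specialize (h (S k) h1). rewrite E1, upd_same in h. destruct h as [[hn|hg] _].
      * exfalso; apply hn; apply (proj2 (next_cond k (S k) i Hk h1)); auto.
      * split; auto; split; auto.
        exact (proj2 (IHf X (TVar c) (S (S c)) _ (S k) HX h1 (upd_same _ _ _) IHc) hg).
  -
    split.
    + intros [j [hkj [hj [hit [hg hf]]]]].
      pose proof (cmp k j Hk hj) as cj. rewrite itvN in hit by lia.
      exists j. split; auto. split; [lia|]. rewrite E1, upd_same. split; [destruct hit; split; auto|].
      split; [exact (proj1 (IHf2 X (TVar c) (S (S c)) _ j HX hj (upd_same _ _ _) IHc) hg)|].
      intros j0 hj0. pose proof (cmp j j0 hj hj0). pose proof (cmp j0 k hj0 Hk).
      destruct (classic (tau k <= tau j0 < tau j)) as [hc|hc]; [|tauto].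
      assert (hs : sat lam tau T X j0 f1) by (apply hf; lia). split; right.
      * exact (proj1 (IHf1 X (TVar (S c)) (S (S c)) _ j0 HX hj0 (upd_same _ _ _) IHz) hs).
      * exact (proj1 (IHf1 T (TVar (S c)) (S (S c)) _ j0 HT hj0 (upd_same _ _ _) IHz) (persist f1 X _ HX hj0 hs)).
    + intros [j [hj [hle [[hl hm] [hg hf]]]]]. rewrite E1, upd_same in hm. pose proof (cmp k j Hk hj).
      exists j. split; [lia|]. split; [auto|]. split; [rewrite itvN by lia; split; auto|].
      split; [exact (proj2 (IHf2 X (TVar c) (S (S c)) _ j HX hj (upd_same _ _ _) IHc) hg)|].
      intros i0 h1 h2. assert (hi0 : inlen lam i0) by (apply (inlen_down _ j); auto; lia).
      pose proof (cmp j i0 hj hi0). pose proof (cmp i0 k hi0 Hk).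
      destruct (hf i0 hi0) as [[hn|hs] _].
      * exfalso; apply hn; lia.
      * exact (proj2 (IHf1 X (TVar (S c)) (S (S c)) _ i0 HX hi0 (upd_same _ _ _) IHz) hs).
  -
    split.
    + intros h j hj. rewrite E1, upd_same. pose proof (cmp k j Hk hj).
      match goal with |- (~ ?P \/ _) /\ _ => destruct (classic P) as [hc|hc] end; [|tauto].
      destruct hc as [hle [hl hm]]. assert (hjk : k <= j) by lia.
      assert (hit : in_itv i (tau j - tau k)) by (rewrite itvN by lia; split; auto).
      destruct (h j hjk hj hit) as [hg|[i0 [a [b hs]]]].
      * split; right; left.
        -- exact (proj1 (IHf2 X (TVar c) (S (S c)) _ j HX hj (upd_same _ _ _) IHc) hg).
        -- exact (proj1 (IHf2 T (TVar c) (S (S c)) _ j HT hj (upd_same _ _ _) IHc) (persist f2 X _ HX hj hg)).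
      * assert (hi0 : inlen lam i0) by (apply (inlen_down _ j); auto; lia).
        pose proof (cmp j i0 hj hi0). pose proof (cmp i0 k hi0 Hk).
        split; right; right; exists i0; (split; [auto|split; [lia|]]).
        -- exact (proj1 (IHf1 X (TVar (S c)) (S (S c)) _ i0 HX hi0 (upd_same _ _ _) IHz) hs).
        -- exact (proj1 (IHf1 T (TVar (S c)) (S (S c)) _ i0 HT hi0 (upd_same _ _ _) IHz) (persist f1 X _ HX hi0 hs)).
    + intros h j hkj hj hit.
      specialize (h j hj). rewrite E1, upd_same in h. destruct h as [h _].
      pose proof (cmp k j Hk hj). rewrite itvN in hit by lia.
      destruct h as [hn|[hg|[j0 [hj0 [hb hf]]]]].
      * exfalso; apply hn; split; [lia| destruct hit; split; auto].
      * left. exact (proj2 (IHf2 X (TVar c) (S (S c)) _ j HX hj (upd_same _ _ _) IHc) hg).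
      * right. pose proof (cmp j j0 hj hj0). pose proof (cmp j0 k hj0 Hk).
        exists j0; split; [lia|split; [lia|]].
        exact (proj2 (IHf1 X (TVar (S c)) (S (S c)) _ j0 HX hj0 (upd_same _ _ _) IHz) hf).
Qed.
End S.

Theorem theorem5 (A : Type) (phi : mform A) (lam : option nat)
    (H T : nat -> A -> Prop) (tau : nat -> nat) (i : nat) :
  nonempty_intervals phi ->
  lam <> Some 0 ->
  strict_trace lam H T tau ->
  inlen lam i ->
  (sat lam tau T H i phi <->
     fsat (corrD lam tau) (corrI lam tau T) (corrI lam tau H) env0
          (trans phi (TCon (tau i)) 0)) /\
  (sat lam tau T T i phi <->
     fsat (corrD lam tau) (corrI lam tau T) (corrI lam tau T) env0
          (trans phi (TCon (tau i)) 0)).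
Proof.
  intros _ _ [[hHT _] hs] hi. split.
  - apply (main A lam T tau hs phi H (TCon (tau i)) 0 env0 i); auto. intros v [=].
  - apply (main A lam T tau hs phi T (TCon (tau i)) 0 env0 i); auto. intros v [=].
Qed.
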